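(* Let $p$ be a prime, $m\ge 2$, $G$ an elementary abelian $p$-group of rank $m$, $J$ the Jacobson radical of $\mathbb{F}_pG$, and $N=m(p-1)$. Then for $0<r<N$ the ideal $J^r$ is not a principal ideal of $\mathbb{F}_pG$, while $J^N=\mathbb{F}_p\sum_{g\in G}g$ is principal. Consequently, for $0\le i\le N$, the ideal $J^i$ is checkable in $\mathbb{F}_pG$ if and only if $i\in\{0,1\}$. (Equivalently, with $\mathrm{RM}_p(r,m)=J^{N-r}$ the Reed–Muller code of order $r$ and length $p^m$ over $\mathbb{F}_p$, $0\le r\le N$, the only checkable Reed–Muller codes are $\mathrm{RM}_p(N,m)=\mathbb{F}_pG$ and $\mathrm{RM}_p(N-1,m)=J$.)
   Context: A right ideal $I$ of a group algebra $KG$ is called checkable if there is $v\in KG$ with $I=\{a\in KG: va=0\}$. Here $\mathbb{F}_pG$ is commutative, so right ideals are ideals. *)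

(* Defs.v *)
From HB Require Import structures.
From mathcomp Require Import all_boot all_order all_algebra all_fingroup all_solvable.
Set Implicit Arguments. Unset Strict Implicit. Unset Printing Implicit Defensive.
Import GRing.Theory.
Local Open Scope ring_scope.

(* The group algebra F_p G of a finite group G (given as a finGroupType gT):
   elements are functions G -> F_p, i.e. formal sums \sum_g a(g) g. *)
Notation KG gT p := {ffun gT -> 'F_p}.

Definition gmul (gT : finGroupType) (p : nat) (a b : KG gT p) : KG gT p :=
  [ffun g => \sum_(h : gT) a h * b (h^-1 * g)%g].

Definition gone (gT : finGroupType) (p : nat) : KG gT p :=
  [ffun g => (g == 1%g)%:R].

Definition gsum (gT : finGroupType) (p : nat) : KG gT p := [ffun _ => 1].

Definition jacobson (gT : finGroupType) (p : nat) (a : KG gT p) : Prop :=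
  forall b : KG gT p, exists c : KG gT p,
    gmul (gone gT p - gmul b a) c = gone gT p.

Inductive pow_ideal (gT : finGroupType) (p : nat) (I : KG gT p -> Prop)
  : nat -> KG gT p -> Prop :=
| pow_ideal0 a : pow_ideal I 0 a
| pow_idealM r x y : pow_ideal I r x -> I y -> pow_ideal I r.+1 (gmul x y)
| pow_ideal_zero r : pow_ideal I r.+1 0
| pow_idealD r x y : pow_ideal I r.+1 x -> pow_ideal I r.+1 y ->
                     pow_ideal I r.+1 (x + y).

Definition principal (gT : finGroupType) (p : nat) (I : KG gT p -> Prop) : Prop :=
  exists v : KG gT p, forall a, I a <-> exists b, a = gmul v b.

Definition checkable (gT : finGroupType) (p : nat) (I : KG gT p -> Prop) : Prop :=
  exists v : KG gT p, forall a, I a <-> gmul v a = 0.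

(* Main.v *)
Require Import Defs.
From HB Require Import structures.
From mathcomp Require Import all_boot all_order all_algebra all_fingroup all_solvable.
Import GRing.Theory.
Local Open Scope ring_scope.
From mathcomp Require Import zify.
Set Implicit Arguments. Unset Strict Implicit. Unset Printing Implicit Defensive.

Section Fp.
Variable p : nat.
Hypothesis hp : prime p.

Lemma p_gt1 : (1 < p)%N. Proof. exact: prime_gt1. Qed.

Lemma nv_lt (x : 'F_p) : (x < p)%N.
Proof. by have := ltn_ord x; rewrite [X in (_ < X)%N -> _]Fp_cast. Qed.

Lemma nv_nat n : (n < p)%N -> nat_of_ord (n%:R : 'F_p) = n.
Proof. by move=> h; rewrite val_Fp_nat // modn_small. Qed.

Lemma nv_add (x y : 'F_p) : (nat_of_ord (x + y)) = ((x + y) %% p)%N.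
Proof. by rewrite -{1}(natr_Zp x) -{1}(natr_Zp y) -natrD val_Fp_nat. Qed.

Lemma nv_sub (x y : 'F_p) : (y <= x)%N -> (nat_of_ord (x - y)) = (x - y)%N.
Proof.
move=> le; have := nv_add (x - y) y; rewrite subrK => e.
have lt1 := nv_lt (x - y); have lt2 := nv_lt y; have lt3 := nv_lt x.
case: (ltnP (nat_of_ord (x - y)%R + y)%N p) => h.
  by move: e; rewrite modn_small // => ->; rewrite addnK.
move: e; rewrite -(subnK h) modnDr modn_small; last first.
  by rewrite ltn_subLR // ?addnn; lia.
lia.
Qed.

Lemma nv_eq (x y : 'F_p) : (x : nat) = y -> x = y.
Proof. exact: val_inj. Qed.

Lemma nv1 : nat_of_ord (1 : 'F_p) = 1%N.
Proof. by rewrite -(nv_nat (n:=1)) ?p_gt1. Qed.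

Lemma nv0 : nat_of_ord (0 : 'F_p) = 0%N.
Proof. by []. Qed.

Lemma binFp (x y n : 'F_p) :
  ('C(nat_of_ord (x + y), n))%:R = ('C(x + y, n))%:R :> 'F_p.
Proof.
rewrite nv_add; have lx := nv_lt x; have ly := nv_lt y; have ln := nv_lt n.
case: (ltnP (x + y)%N p) => h; first by rewrite modn_small.
set u := ((x + y) %% p)%N.
have hu : u = (x + y - p)%N.
  by rewrite /u -{1}(subnK h) modnDr modn_small //; lia.
have ->: (x + y = u + p)%N by rewrite hu; lia.
rewrite -binomial.Vandermonde natr_sum big_ord_recr /= subnn bin0 muln1 big1 ?add0r //.
move=> j _; rewrite natrM.
have hj : (0 < n - j < p)%N by have := ltn_ord j; lia.
have: (p %| 'C(p, n - j))%N by apply: prime_dvd_bin hp _.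
move=> /eqP hd; by rewrite -(Fp_nat_mod hp ('C(p, _))) hd mulr0.
Qed.
End Fp.

Section Main.
Variable p : nat.
Hypothesis hp : prime p.
Variables (gT : finGroupType) (m : nat).
Notation E := {ffun 'I_m -> 'F_p}.
Notation KG := {ffun gT -> 'F_p}.
Variable X : gT -> E.
Hypothesis XM : forall g h, X (g * h)%g = X g + X h.
Hypothesis Xinj : injective X.
Variable Y : E -> gT.
Hypothesis XY : cancel Y X.

Definition wt (e : E) : nat := (\sum_i nat_of_ord (e i))%N.
Definition le (u e : E) := [forall i, (nat_of_ord (u i) <= nat_of_ord (e i))%N].
Definition B (e : E) (g : gT) : 'F_p := \prod_i ('C(X g i, e i))%:R.
Definition phi (e : E) (a : KG) : 'F_p := \sum_g a g * B e g.

Lemma bin_split (x y n : 'F_p) :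
  ('C(nat_of_ord (x + y), n))%:R =
  \sum_(k : 'F_p | (nat_of_ord k <= n)%N) ('C(x,k))%:R * ('C(y, nat_of_ord (n - k)))%:R :> 'F_p.
Proof.
rewrite binFp // -binomial.Vandermonde natr_sum.
have hn : (n.+1 <= (Zp_trunc (pdiv p)).+2)%N by have := nv_lt hp n; have := Fp_cast hp; lia.
rewrite (big_ord_widen _ (fun j => ('C(x, j) * 'C(y, n - j))%:R) hn).
apply: eq_big => [k|k hk] //; rewrite natrM nv_sub //.
Qed.

Lemma prod_if (P : pred 'I_m) (F : 'I_m -> 'F_p) :
  \prod_i (if P i then F i else 0) = if [forall i, P i] then \prod_i F i else 0.
Proof.
case: forallP => h; first by apply: eq_bigr => i _; rewrite h.
have [i hi] : exists i, ~~ P i.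
  by apply/existsP; rewrite -negb_forall; apply/negP => /forallP.
by rewrite (bigD1 i) //= ifN // mul0r.
Qed.

Lemma B_split (e : E) (g h : gT) :
  B e (g * h) = \sum_(H : E | le H e) B H g * B (e - H) h.
Proof.
rewrite /B XM.
under eq_bigr => i _ do rewrite ffunE.
under eq_bigr => i _ do rewrite bin_split.
under eq_bigr => i _ do rewrite big_mkcond.
rewrite bigA_distr_bigA /= [RHS]big_mkcond /=; apply: eq_bigr => f _.
rewrite prod_if /le; case: ifP => // _.
rewrite -big_split /=; apply: eq_bigr => i _; by rewrite !ffunE.
Qed.

Lemma phiM (e : E) (a b : KG) :
  phi e (gmul a b) = \sum_(H : E | le H e) phi H a * phi (e - H) b.
Proof.
rewrite /phi /gmul.
under eq_bigr => z _ do rewrite ffunE mulr_suml.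
rewrite exchange_big /=.
under eq_bigr => h _ do rewrite (reindex_inj (mulgI h)) /=.
under eq_bigr => h _ do under eq_bigr => y _ do rewrite mulKg B_split mulr_sumr.
under [RHS]eq_bigr => H _ do rewrite mulr_suml.
rewrite [RHS]exchange_big /=; apply: eq_bigr => h _.
under [RHS]eq_bigr => H _ do rewrite mulr_sumr.
rewrite [RHS]exchange_big /=; apply: eq_bigr => y _.
apply: eq_bigr => H _; by rewrite mulrACA.
Qed.


Lemma nvE (e : E) i : (nat_of_ord (e i) < p)%N. Proof. exact: nv_lt. Qed.

Lemma subE (e H : E) i : le H e -> nat_of_ord ((e - H) i) = (e i - H i)%N.
Proof. by move=> /forallP h; rewrite !ffunE nv_sub. Qed.

Lemma le_sub (e H : E) : le H e -> le (e - H) e.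
Proof. move=> h; apply/forallP => i; rewrite subE //; exact: leq_subr. Qed.

Lemma le_refl (e : E) : le e e. Proof. by apply/forallP. Qed.

Lemma le0 (e : E) : le 0 e. Proof. by apply/forallP => i; rewrite ffunE. Qed.

Lemma wt_sub (e H : E) : le H e -> wt e = (wt H + wt (e - H)%R)%N.
Proof.
move=> h; rewrite /wt -big_split /=; apply: eq_bigr => i _.
rewrite subE //; move/forallP: h => /(_ i); lia.
Qed.

Lemma wt_eq0 (e : E) : wt e = 0%N -> e = 0.
Proof.
move=> /eqP; rewrite /wt sum_nat_eq0 => /forallP h.
apply/ffunP => i; rewrite ffunE; apply: val_inj => /=; exact/eqP/(h i).
Qed.

Lemma wt0 : wt 0 = 0%N.
Proof. by rewrite /wt big1 // => i _; rewrite ffunE. Qed.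

Lemma le_wt (u e : E) : le u e -> u != e -> (wt u < wt e)%N.
Proof.
move=> h ne; rewrite (wt_sub h); suff : wt (e - u)%R <> 0%N by lia.
by move/wt_eq0/eqP; rewrite subr_eq0 eq_sym (negPf ne).
Qed.

Lemma le_wt_eq (u e : E) : le u e -> (wt e <= wt u)%N -> u = e.
Proof. move=> h w; apply/eqP; apply: contraTT w => ne; rewrite -ltnNge; exact: le_wt. Qed.

Lemma wt_le (u e : E) : le u e -> (wt u <= wt e)%N.
Proof. by move=> h; rewrite (wt_sub h) leq_addr. Qed.

Lemma sum1 (P : pred E) (F : E -> 'F_p) H0 : P H0 ->
  (forall H, P H -> H != H0 -> F H = 0) -> \sum_(H | P H) F H = F H0.
Proof. move=> h0 h; rewrite (bigD1 H0) //= big1 ?addr0 // => H /andP[]; exact: h. Qed.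

Lemma phiD e (a b : KG) : phi e (a + b) = phi e a + phi e b.
Proof. by rewrite /phi -big_split; apply: eq_bigr => g _; rewrite ffunE mulrDl. Qed.

Definition sc (c : 'F_p) (a : KG) : KG := [ffun g => c * a g].

Lemma phiZ e (c : 'F_p) (a : KG) : phi e (sc c a) = c * phi e a.
Proof. by rewrite /phi mulr_sumr; apply: eq_bigr => g _; rewrite ffunE mulrA. Qed.

Lemma phi0 e : phi e (0 : KG) = 0.
Proof. by rewrite /phi big1 // => g _; rewrite ffunE mul0r. Qed.

Lemma phiN e (a : KG) : phi e (- a) = - phi e a.
Proof. by rewrite /phi -sumrN; apply: eq_bigr => g _; rewrite ffunE mulNr. Qed.

Lemma phiB e (a b : KG) : phi e (a - b) = phi e a - phi e b.
Proof. by rewrite phiD phiN. Qed.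

Lemma gmulD (a b c : KG) : gmul a (b + c) = gmul a b + gmul a c.
Proof.
by apply/ffunP => g; rewrite !ffunE -big_split; apply: eq_bigr => h _; rewrite ffunE mulrDr.
Qed.

Lemma gmulZ (a b : KG) (c : 'F_p) : gmul a (sc c b) = sc c (gmul a b).
Proof.
apply/ffunP => g; rewrite !ffunE mulr_sumr; apply: eq_bigr => h _.
by rewrite ffunE mulrCA.
Qed.

Lemma gmul0 (a : KG) : gmul a 0 = 0.
Proof. by apply/ffunP => g; rewrite !ffunE big1 // => h _; rewrite ffunE mulr0. Qed.

Lemma gmulN (a b : KG) : gmul a (- b) = - gmul a b.
Proof.
by apply/ffunP => g; rewrite !ffunE -sumrN; apply: eq_bigr => h _; rewrite ffunE mulrN.
Qed.

Lemma gmulB (a b c : KG) : gmul a (b - c) = gmul a b - gmul a c.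
Proof. by rewrite gmulD gmulN. Qed.


Lemma wt_bound (e : E) : (wt e <= m * (p - 1))%N.
Proof.
rewrite /wt; apply: leq_trans (_ : (\sum_(i < m) (p - 1) <= _)%N).
  apply: leq_sum => i _; have := nvE e i; lia.
by rewrite sum_nat_const card_ord.
Qed.

Lemma B_nz (e : E) h : B e h != 0 -> le e (X h).
Proof.
apply: contraR; rewrite /le negb_forall => /existsP[i]; rewrite -ltnNge => lt.
by rewrite /B (bigD1 i) //= bin_small // mul0r.
Qed.

Lemma BX g : B (X g) g = 1.
Proof. by rewrite /B big1 // => i _; rewrite binn. Qed.

Lemma B0 g : B 0 g = 1.
Proof. by rewrite /B big1 // => i _; rewrite ffunE bin0. Qed.

Lemma phi_inj (a : KG) : (forall e, phi e a = 0) -> a = 0.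
Proof.
move=> ha.
suff P : forall n g, (m * (p - 1) < wt (X g) + n)%N -> a g = 0.
  apply/ffunP => g; rewrite ffunE; apply: (P (m * (p - 1)).+1); lia.
elim => [|n IH] g hg; first by have := wt_bound (X g); lia.
have := ha (X g); rewrite /phi (bigD1 g) //= BX mulr1 big1 ?addr0 //.
move=> h hne; case: (B (X g) h =P 0) => [->|/eqP nz]; first by rewrite mulr0.
have hle := B_nz nz.
have ne : X g != X h by apply: contra hne => /eqP /Xinj ->.
have := le_wt hle ne => lt.
by rewrite IH ?mul0r //; lia.
Qed.

Lemma phiM_unit (u e : E) (a b : KG) : (forall e', phi e' b = (e' == u)%:R) ->
  phi e (gmul a b) = if le u e then phi (e - u) a else 0.
Proof.
move=> hb; rewrite phiM; case: ifP => hu.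
  rewrite (@sum1 _ _ (e - u)) ?le_sub //; first by rewrite hb subKr eqxx mulr1.
  move=> H hH ne; rewrite hb; case: eqP => [e1|]; last by rewrite mulr0.
  by move: ne; rewrite -e1 subKr eqxx.
rewrite big1 // => H hH; rewrite hb; case: eqP => [e1|]; last by rewrite mulr0.
by move: hu; rewrite -e1 le_sub.
Qed.

Lemma phiM_low (e : E) (v b : KG) : (forall e', (wt e' < wt e)%N -> phi e' v = 0) ->
  phi e (gmul v b) = phi e v * phi 0 b.
Proof.
move=> hv; rewrite phiM (@sum1 _ _ e) ?le_refl ?subrr // => H hH ne.
by rewrite hv ?mul0r // le_wt.
Qed.

Lemma phiM_min (e : E) (u c : KG) : (forall e', (wt e' < wt e)%N -> phi e' c = 0) ->
  phi e (gmul u c) = phi 0 u * phi e c.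
Proof.
move=> hc; rewrite phiM (@sum1 _ _ 0) ?le0 ?subr0 // => H hH ne.
rewrite hc ?mulr0 //; rewrite [X in (_ < X)%N](wt_sub hH).
suff : wt H <> 0%N by lia.
by move/wt_eq0/eqP; rewrite (negPf ne).
Qed.

Lemma Dmul r (x y : KG) : (forall e', (wt e' < r)%N -> phi e' x = 0) -> phi 0 y = 0 ->
  forall e, (wt e < r.+1)%N -> phi e (gmul x y) = 0.
Proof.
move=> hx hy e he; rewrite phiM big1 // => H hH.
case: (ltnP (wt H) r) => h; first by rewrite hx ?mul0r.
have : wt (e - H)%R = 0%N.
  move: he; rewrite (wt_sub hH). move: h. set z := wt H. set w := wt (e - H)%R. lia.
by move/wt_eq0 ->; rewrite hy mulr0.
Qed.

Lemma epsM (a b : KG) : phi 0 (gmul a b) = phi 0 a * phi 0 b.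
Proof.
rewrite phiM (@sum1 _ _ 0) ?le0 ?subr0 // => H hH ne.
by move: ne; rewrite (le_wt_eq hH) ?eqxx // wt0.
Qed.

Lemma eps_gone : phi 0 (gone gT p) = 1.
Proof.
rewrite /phi (bigD1 1%g) //= big1 ?addr0; first by rewrite ffunE eqxx B0 mulr1.
by move=> g ne; rewrite ffunE (negPf ne) mul0r.
Qed.

Lemma unit_lemma (u : KG) : phi 0 u != 0 -> exists c, gmul u c = gone gT p.
Proof.
move=> hu.
have inj : injective (gmul u).
  move=> c1 c2 eq; apply/eqP; rewrite -subr_eq0; apply/eqP.
  move: (c1 - c2) (gmulB u c1 c2) => c; rewrite eq subrr => hc.
  apply: phi_inj => e0; apply/eqP; apply/negPn/negP => nz0.
  have exP : exists n, [exists e, (wt e == n) && (phi e c != 0)].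
    by exists (wt e0); apply/existsP; exists e0; rewrite eqxx nz0.
  case: (ex_minnP exP) => n /existsP[e /andP[/eqP we nze]] minn.
  have : phi e (gmul u c) != 0.
    rewrite phiM_min ?mulf_neq0 // => e' lt; apply/eqP; apply/negPn/negP => nz'.
    have h1 : (n <= wt e')%N by apply: minn; apply/existsP; exists e'; rewrite eqxx nz'.
    by move: lt; rewrite we ltnNge h1.
  by rewrite hc phi0 eqxx.
have [g _ gK] := injF_bij inj.
by exists (g (gone gT p)); rewrite gK.
Qed.

Lemma jacE (a : KG) : jacobson a <-> phi 0 a = 0.
Proof.
split => [hj | ha b].
  apply/eqP; apply/negPn/negP => nz.
  have [c hc] := hj (sc (phi 0 a)^-1 (gone gT p)).
  have := congr1 (phi 0) hc.
  rewrite epsM phiB epsM phiZ eps_gone mulr1 mulVf // subrr mul0r => /eqP.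
  by rewrite eq_sym oner_eq0.
apply: unit_lemma; rewrite phiB epsM ha mulr0 subr0 eps_gone oner_neq0 //.
Qed.


Lemma gsumM (b : KG) : gmul (gsum gT p) b = sc (phi 0 b) (gsum gT p).
Proof.
apply/ffunP => g; rewrite !ffunE mulr1 /phi.
have inj : injective (fun y : gT => (y^-1 * g)%g).
  by move=> y1 y2 /mulIg /invg_inj.
rewrite [RHS](reindex_inj inj) /=; apply: eq_bigr => h _.
by rewrite !ffunE mul1r B0 mulr1.
Qed.

Lemma gone_mul (a : KG) : gmul (gone gT p) a = a.
Proof.
apply/ffunP => g; rewrite ffunE (bigD1 1%g) //= big1 ?addr0.
  by rewrite ffunE eqxx mul1r invg1 mul1g.
by move=> h ne; rewrite ffunE (negPf ne) mul0r.
Qed.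

Lemma mul_gone (a : KG) : gmul a (gone gT p) = a.
Proof.
apply/ffunP => g; rewrite ffunE (bigD1 g) //= big1 ?addr0.
  by rewrite ffunE mulVg eqxx mulr1.
move=> h ne; rewrite ffunE; case: eqP => [e|]; last by rewrite mulr0.
by move: ne; rewrite -(mulKVg h g) e mulg1 eqxx.
Qed.

Definition unitv (i : 'I_m) : E := [ffun j => (j == i)%:R].

Lemma nv_unit i j : nat_of_ord (unitv i j) = (j == i).
Proof. by rewrite ffunE nv_nat //; case: (j == i); rewrite ?p_gt1 ?prime_gt0. Qed.

Lemma X1 : X 1%g = 0.
Proof. have h := XM 1%g 1%g; rewrite mulg1 in h. by apply: (addrI (X 1%g)); rewrite addr0 -h. Qed.

Definition gi i := Y (unitv i).
Definition xi i : KG := [ffun g => (g == gi i)%:R - (g == 1%g)%:R].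

Lemma prod_bool (P : pred 'I_m) : \prod_j ((P j : nat)%:R : 'F_p) = ([forall j, P j] : nat)%:R.
Proof.
case: forallP => h; first by rewrite big1 // => j _; rewrite h.
have [i hi] : exists i, ~~ P i.
  by apply/existsP; rewrite -negb_forall; apply/negP => /forallP.
by rewrite (bigD1 i) //= (negPf hi) mul0r.
Qed.

Lemma phi_gone e : phi e (gone gT p) = (e == 0)%:R.
Proof.
rewrite /phi (bigD1 1%g) //= big1 ?addr0; last first.
  by move=> h ne; rewrite ffunE (negPf ne) mul0r.
rewrite ffunE eqxx mul1r /B X1.
under eq_bigr => j _ do rewrite ffunE bin0n.
rewrite prod_bool; congr (_%:R); congr (nat_of_bool _).
apply/forallP/eqP => [h|->] ; last by move=> j; rewrite ffunE.
by apply/ffunP => j; rewrite ffunE; apply: val_inj; apply/eqP; exact: h.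
Qed.

Lemma gi_ne1 i : gi i != 1%g.
Proof.
apply/eqP => h; have := congr1 X h; rewrite /gi XY X1 => /ffunP /(_ i).
by rewrite !ffunE eqxx => /eqP; rewrite oner_eq0.
Qed.

Lemma phi_xi e i : phi e (xi i) = (e == unitv i)%:R.
Proof.
have ne1 := gi_ne1 i.
have ->: phi e (xi i) = B e (gi i) - B e 1%g.
  rewrite /phi (bigD1 (gi i)) //= (bigD1 1%g) /=; last by rewrite eq_sym.
  rewrite big1 ?addr0; last first.
    by move=> g /andP[h1 h2]; rewrite ffunE (negPf h1) (negPf h2) subrr mul0r.
  rewrite !ffunE eqxx (negPf ne1) [(1%g == gi i)]eq_sym (negPf ne1) eqxx subr0 sub0r.
  by rewrite mul1r mulN1r.
rewrite /B /gi XY X1.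
rewrite (bigD1 i) //= [X in _ - X](bigD1 i) //=.
have -> : \prod_(j | j != i) ('C(unitv i j, e j))%:R = \prod_(j | j != i) ('C(0, e j))%:R :> 'F_p.
  by apply: eq_bigr => j hj; rewrite nv_unit (negPf hj).
have -> : \prod_(j | j != i) ('C(((0 : E)%R j), e j))%:R = \prod_(j | j != i) ('C(0, e j))%:R :> 'F_p.
  by apply: eq_bigr => j hj; rewrite ffunE.
rewrite -mulrBl nv_unit eqxx ffunE /=.
case: (boolP [forall (j | j != i), (nat_of_ord (e j) == 0)%N]) => hz.
  rewrite big1; last by move=> j hj; rewrite bin0n; move/forallP: hz => /(_ j); rewrite hj => /= ->.
  rewrite mulr1 bin0n.
  have eu : (e == unitv i) = (nat_of_ord (e i) == 1%N).
    apply/eqP/eqP => [->|h]; first by rewrite nv_unit eqxx.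
    apply/ffunP => j; apply: val_inj => /=; rewrite nv_unit.
    case: (eqVneq j i) => [->//|hj]; move/forallP: hz => /(_ j); rewrite hj => /= /eqP.
    by [].
  rewrite eu; case: (nat_of_ord (e i)) => [|[|n]] //=; rewrite ?subrr //.
  by rewrite subr0.
move: hz; rewrite negb_forall => /existsP[j]; rewrite negb_imply => /andP[hj nz].
rewrite (bigD1 j) //= (bin0n (e j)) (negPf nz) mul0r mulr0.
have -> : (e == unitv i) = false.
  apply/eqP => eu; move: nz; rewrite eu nv_unit (negPf hj) //.
by [].
Qed.


Lemma eps_xi i : phi 0 (xi i) = 0.
Proof.
rewrite phi_xi; case: eqP => // /ffunP /(_ i); rewrite !ffunE eqxx => /eqP.
by rewrite eq_sym oner_eq0.
Qed.

Lemma jac_xi i : jacobson (xi i). Proof. by apply/jacE/eps_xi. Qed.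

Definition mono (s : seq 'I_m) : KG := foldr (fun i a => gmul a (xi i)) (gone gT p) s.
Definition cnt (s : seq 'I_m) : E := [ffun j => (count_mem j s)%:R].

Lemma phi_mono s : (forall j, count_mem j s < p)%N -> forall f, phi f (mono s) = (f == cnt s)%:R.
Proof.
elim: s => [|i s IH] hs f.
  rewrite /= phi_gone; congr ((_ : bool)%:R); congr (f == _); apply/ffunP => j.
have hs' : forall j, (count_mem j s < p)%N.
  by move=> j; have := hs j; rewrite /= ; lia.
rewrite /= (phiM_unit _ _ (phi_xi^~ i)) .
have ec : cnt (i :: s) = cnt s + unitv i.
  by apply/ffunP => j; rewrite !ffunE /= natrD addrC eq_sym.
rewrite ec; case: ifP => hu.
  by rewrite IH // subr_eq.
case: eqP => // ef; move: hu; rewrite ef -ec => /negbT /negP hn; exfalso; apply: hn; apply/forallP => j.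
rewrite nv_unit ffunE nv_nat //=; first by rewrite eq_sym; case: (i == j). 
exact: hs.
Qed.

Lemma pow_D r (a : KG) : pow_ideal (@jacobson gT p) r a ->
  forall e, (wt e < r)%N -> phi e a = 0.
Proof.
elim => {r a} [a|r x y _ IH hy|r|r x y _ IHx _ IHy] e he //.
- by apply: (Dmul IH) => //; apply/jacE.
- exact: phi0.
- by rewrite phiD IHx ?IHy ?addr0.
Qed.

Lemma pow_mono s : pow_ideal (@jacobson gT p) (size s) (mono s).
Proof.
elim: s => [|i s IH] /=; first exact: pow_ideal0.
by apply: pow_idealM => //; exact: jac_xi.
Qed.

Lemma pow_sc r (a : KG) c : pow_ideal (@jacobson gT p) r.+1 a ->
  pow_ideal (@jacobson gT p) r.+1 (sc c a).
Proof.
move=> ha; rewrite -(natr_Zp c); elim: (nat_of_ord c) => [|n IH].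
  have -> : sc 0 a = 0 by apply/ffunP => g; rewrite !ffunE mul0r.
  exact: pow_ideal_zero.
have -> : sc (n.+1)%:R a = sc n%:R a + a by apply/ffunP => g; rewrite !ffunE mulrSr mulrDl mul1r.
exact: pow_idealD.
Qed.

Definition seqv (e : E) : seq 'I_m := flatten [seq nseq (nat_of_ord (e j)) j | j <- enum 'I_m].

Lemma count_seqv e j : count_mem j (seqv e) = nat_of_ord (e j).
Proof.
rewrite /seqv count_flatten -map_comp sumnE big_map big_enum /=.
rewrite (bigD1 j) //= big1 ?addn0; first by rewrite count_nseq /= eqxx mul1n.
by move=> k hk; rewrite count_nseq /= (negPf hk).
Qed.

Lemma size_seqv e : size (seqv e) = wt e.
Proof.
rewrite /seqv size_flatten /shape -map_comp sumnE big_map big_enum /=.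
by apply: eq_bigr => k _; rewrite /= size_nseq.
Qed.

Lemma cnt_seqv e : cnt (seqv e) = e.
Proof. by apply/ffunP => j; rewrite ffunE count_seqv natr_Zp. Qed.

Definition monov e := mono (seqv e).

Lemma phi_monov e f : phi f (monov e) = (f == e)%:R.
Proof. by rewrite phi_mono ?cnt_seqv // => j; rewrite count_seqv nvE. Qed.

Lemma pow_monov e : pow_ideal (@jacobson gT p) (wt e) (monov e).
Proof. by rewrite -size_seqv; exact: pow_mono. Qed.


Definition topv : E := [ffun _ => (p - 1)%:R].

Lemma nv_top j : nat_of_ord (topv j) = (p - 1)%N.
Proof. by rewrite ffunE nv_nat //; have := p_gt1 hp; lia. Qed.

Lemma le_top (e : E) : le e topv.
Proof. by apply/forallP => j; rewrite nv_top; have := nvE e j; lia. Qed.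

Lemma wt_top : wt topv = (m * (p - 1))%N.
Proof.
by rewrite /wt (eq_bigr (fun _ => (p - 1)%N)) ?sum_nat_const ?card_ord // => j _; rewrite nv_top.
Qed.

Lemma wt_lt_top (e : E) : e != topv -> (wt e < m * (p - 1))%N.
Proof. by move=> ne; rewrite -wt_top; apply: le_wt => //; exact: le_top. Qed.

Lemma not_top (e : E) : (wt e < m * (p - 1))%N -> exists j, ((nat_of_ord (e j)).+1 < p)%N.
Proof.
move=> lt; apply/existsP; apply: contraLR lt; rewrite negb_exists => /forallP h.
rewrite -leqNgt -wt_top; apply: leq_sum => j _; rewrite nv_top.
by move: (h j); rewrite -leqNgt; lia.
Qed.

Lemma pos_coord (e : E) : (0 < wt e)%N -> exists i, (0 < nat_of_ord (e i))%N.
Proof.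
move=> lt; apply/existsP; apply: contraLR lt; rewrite negb_exists => /forallP h.
suff -> : e = 0 by rewrite wt0.
by apply/ffunP => j; rewrite ffunE; apply: val_inj => /=; move: (h j); rewrite lt0n negbK => /eqP.
Qed.

Lemma add_unitE (e : E) j k : ((nat_of_ord (e j)).+1 < p)%N ->
  nat_of_ord ((e + unitv j) k) = (e k + (k == j))%N.
Proof.
move=> h; rewrite ffunE nv_add // nv_unit modn_small //.
case: (eqVneq k j) => [->|] ; rewrite ?addn1 ?addn0 // => _; exact: nv_lt.
Qed.

Lemma wt_unit i : wt (unitv i) = 1%N.
Proof.
rewrite /wt (bigD1 i) //= nv_unit eqxx big1 // => k hk.
by rewrite nv_unit (negPf hk).
Qed.

Lemma le_unit (e : E) i : (0 < nat_of_ord (e i))%N -> le (unitv i) e.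
Proof.
move=> h; apply/forallP => k; rewrite nv_unit; case: (eqVneq k i) => [->|] //=.
Qed.

Lemma le_add_unit (e : E) j : ((nat_of_ord (e j)).+1 < p)%N -> le e (e + unitv j).
Proof. move=> h; apply/forallP => k; rewrite add_unitE //; exact: leq_addr. Qed.

Lemma wt_add_unit (e : E) j : ((nat_of_ord (e j)).+1 < p)%N -> wt (e + unitv j) = (wt e).+1.
Proof.
move=> h; rewrite (wt_sub (le_add_unit h)) addrC addKr wt_unit addn1 //.
Qed.

Lemma ex_wt r : (r <= m * (p - 1))%N -> exists e, wt e = r.
Proof.
elim: r => [|r IH] h; first by exists 0; rewrite wt0.
have [e we] := IH (ltnW h).
have [j hj] : exists j, ((nat_of_ord (e j)).+1 < p)%N by apply: not_top; rewrite we.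
by exists (e + unitv j); rewrite wt_add_unit // we.
Qed.

Lemma swap_two (e : E) i j : i != j -> (0 < nat_of_ord (e i))%N -> ((nat_of_ord (e j)).+1 < p)%N ->
  exists e2, wt e2 = wt e /\ e2 != e.
Proof.
move=> ij hi hj.
have lu := le_unit hi.
have hj' : ((nat_of_ord ((e - unitv i)%R j)).+1 < p)%N by rewrite subE // nv_unit eq_sym (negPf ij) subn0.
exists (e - unitv i + unitv j); split.
  rewrite wt_add_unit // (wt_sub lu) wt_unit //.
apply/eqP => /ffunP /(_ j) /(congr1 (@nat_of_ord _)).
rewrite add_unitE // subE // nv_unit eq_sym (negPf ij) subn0 eqxx addn1.
by move=> h; have := n_Sn (nat_of_ord (e j)); rewrite h.
Qed.

Lemma ex_two r : (0 < r < m * (p - 1))%N -> (1 < m)%N ->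
  exists e1 e2, [/\ wt e1 = r, wt e2 = r & e1 != e2].
Proof.
move=> /andP[r0 rN] hm.
have [e we] := ex_wt (ltnW rN).
have [i hi] : exists i, (0 < nat_of_ord (e i))%N by apply: pos_coord; rewrite we.
have [j hj] : exists j, ((nat_of_ord (e j)).+1 < p)%N by apply: not_top; rewrite we.
suff [e2 [w2 ne]] : exists e2, wt e2 = wt e /\ e2 != e.
  by exists e, e2; split => //; rewrite ?w2 // eq_sym.
case: (eqVneq i j) => [eij|ij]; last exact: swap_two ij hi hj.
subst j.
have [k hk] : exists k : 'I_m, k != i.
  have m0 : (0 < m)%N by lia.
  pose k0 := Ordinal m0; pose k1 := Ordinal hm.
  case: (eqVneq k0 i) => [e0|]; last by exists k0.
  by exists k1; rewrite -e0.
case: (posnP (nat_of_ord (e k))) => ek.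
  apply: (@swap_two e i k) => //; [by rewrite eq_sym | by rewrite ek; exact: p_gt1].
by apply: (@swap_two e k i).
Qed.


Notation J := (@jacobson gT p).
Notation N := (m * (p - 1))%N.

Lemma partA r : (0 < r < N)%N -> (1 < m)%N -> ~ principal (pow_ideal J r).
Proof.
move=> hr hm [v hv].
have vJ : pow_ideal J r v by apply/hv; exists (gone gT p); rewrite mul_gone.
have Dv := pow_D vJ.
have [e1 [e2 [w1 w2 ne]]] := ex_two hr hm.
have [b1 hb1] : exists b, monov e1 = gmul v b by apply/hv; rewrite -w1; exact: pow_monov.
have [b2 hb2] : exists b, monov e2 = gmul v b by apply/hv; rewrite -w2; exact: pow_monov.
have low : forall e, wt e = r -> forall b, phi e (gmul v b) = phi e v * phi 0 b.
  by move=> e we b; apply: phiM_low => e' lt; apply: Dv; rewrite -we.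
have h11 := congr1 (phi e1) hb1; rewrite phi_monov eqxx low // in h11.
have h21 := congr1 (phi e2) hb1; rewrite phi_monov eq_sym (negPf ne) low // in h21.
have h22 := congr1 (phi e2) hb2; rewrite phi_monov eqxx low // in h22.
have nz : phi 0 b1 != 0 by apply/eqP => z; move: h11; rewrite z mulr0 => /eqP; rewrite oner_eq0.
have : phi e2 v = 0 by apply/eqP; move: h21 => /esym/eqP; rewrite mulf_eq0 (negPf nz) orbF.
by move=> z; move: h22; rewrite z mul0r => /eqP; rewrite oner_eq0.
Qed.

Lemma gsum_xi j : gmul (gsum gT p) (xi j) = 0.
Proof. by rewrite gsumM eps_xi; apply/ffunP => g; rewrite !ffunE mul0r. Qed.

Lemma phi_gsum f : f != topv -> phi f (gsum gT p) = 0.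
Proof.
move=> ne; have [j hj] := not_top (wt_lt_top ne).
have := congr1 (phi (f + unitv j)) (gsum_xi j).
rewrite (phiM_unit _ _ (phi_xi^~ j)) phi0 addrK.
have -> // : le (unitv j) (f + unitv j).
by apply: le_unit; rewrite add_unitE // eqxx addn1.
Qed.

Definition s0 := phi topv (gsum gT p).

Lemma gsum_mono : gsum gT p = sc s0 (monov topv).
Proof.
apply/eqP; rewrite -subr_eq0; apply/eqP/phi_inj => f.
rewrite phiB phiZ phi_monov; case: eqP => [->|/eqP ne].
  by rewrite mulr1 subrr.
by rewrite phi_gsum // mulr0 subrr.
Qed.

Lemma s0_nz : s0 != 0.
Proof.
apply/eqP => z; have := congr1 (fun a : KG => a 1%g) gsum_mono.
by rewrite /= !ffunE z mul0r => /eqP; rewrite oner_eq0.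
Qed.

Lemma N_pos : (1 < m)%N -> (0 < N)%N.
Proof. move=> hm; have := p_gt1 hp; rewrite muln_gt0; lia. Qed.

Lemma partB : (1 < m)%N -> forall a, pow_ideal J N a <-> exists c : 'F_p, a = [ffun g => c * gsum gT p g].
Proof.
move=> hm a; split => [ha|[c ->]].
  exists (phi topv a / s0).
  apply/eqP; rewrite -subr_eq0; apply/eqP/phi_inj => f.
  rewrite phiB (phiZ f _ (gsum gT p)); case: (eqVneq f topv) => [->|ne].
    by rewrite /s0 divfK ?subrr // s0_nz.
  by rewrite phi_gsum // mulr0 (pow_D ha) ?subrr // wt_lt_top.
have := pow_monov topv; rewrite wt_top gsum_mono.
have := N_pos hm; case: N => // n _ h.
change (pow_ideal J n.+1 (sc c (sc s0 (monov topv)))).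
by apply: pow_sc; apply: pow_sc.
Qed.


Lemma eps_sc_gone c : phi 0 (sc c (gone gT p)) = c.
Proof. by rewrite phiZ eps_gone mulr1. Qed.

Lemma partC : (1 < m)%N -> principal (pow_ideal J N).
Proof.
move=> hm; exists (gsum gT p) => a; rewrite partB //; split => [[c ->]|[b ->]].
  by exists (sc c (gone gT p)); rewrite gsumM eps_sc_gone.
by exists (phi 0 b); rewrite gsumM.
Qed.

Lemma zero_mul (a : KG) : gmul 0 a = 0.
Proof. by apply/ffunP => g; rewrite !ffunE big1 // => h _; rewrite ffunE mul0r. Qed.

Lemma pow1 a : pow_ideal J 1 a <-> jacobson a.
Proof.
split => [h|h].
  apply/jacE; apply: (pow_D h); by rewrite wt0.
by rewrite -(gone_mul a); apply: pow_idealM => //; exact: pow_ideal0.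
Qed.

Lemma sc_gsum0 c : sc c (gsum gT p) = 0 -> c = 0.
Proof. by move=> /(congr1 (fun a : KG => a 1%g)); rewrite !ffunE mulr1. Qed.

Lemma partD_neg i : (2 <= i <= N)%N -> (1 < m)%N -> ~ checkable (pow_ideal J i).
Proof.
move=> /andP[i2 iN] hm [v hv].
have h1 : forall e, wt e = i -> forall f : E, (forall k, nat_of_ord (f k) + nat_of_ord (e k) < p)%N ->
    phi f v = 0.
  move=> e we f hf; move: f hf => f hf.
  have : gmul v (monov e) = 0 by apply/hv; rewrite -we; exact: pow_monov.
  move=> /(congr1 (phi (f + e))); rewrite (phiM_unit _ _ (phi_monov e)) phi0 addrK.
  have -> // : le e (f + e).
  apply/forallP => k; rewrite ffunE nv_add // modn_small ?leq_addl //.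
have h2 : forall e, wt e = i.-1 -> gmul v (monov e) != 0.
  move=> e we; apply/eqP => /hv /pow_D /(_ e).
  have hi : (i.-1 < i)%N by lia.
  by rewrite phi_monov eqxx we => /(_ hi) /eqP; rewrite oner_eq0.
have h3 : forall e g, wt e = i.-1 -> phi g (gmul v (monov e)) != 0 -> g = topv.
  move=> e g we; rewrite (phiM_unit _ _ (phi_monov e)); case: ifP => hle; last by rewrite eqxx.
  move=> nz; apply/eqP; apply/negPn/negP => ne.
  have [j hj] := not_top (wt_lt_top ne).
  have hej : ((nat_of_ord (e j)).+1 < p)%N.
    by move/forallP: hle => /(_ j); lia.
  move/eqP: nz; apply; apply: (h1 (e + unitv j)).
    by rewrite wt_add_unit // we; lia.
  move=> k; rewrite add_unitE // subE //.
  move/forallP: (hle) => hle'.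
  case: (eqVneq k j) => [->|_] /=.
    by have := hle' j; rewrite addn1; lia.
  by have := hle' k; have := nvE g k; rewrite addn0; lia.
pose lam e := phi topv (gmul v (monov e)).
have h5 : forall e, wt e = i.-1 -> forall g, phi g (gmul v (monov e)) = (g == topv)%:R * lam e.
  move=> e we g; case: (eqVneq g topv) => [->|ne]; first by rewrite mul1r.
  rewrite mul0r; apply/eqP; apply/negPn/negP => nz; move/eqP: ne; apply; exact: h3 we nz.
have h4 : forall e, wt e = i.-1 -> lam e != 0.
  move=> e we; apply/eqP => z; move/eqP: (h2 e we); apply; apply: phi_inj => g.
  by rewrite h5 // z mulr0.
have hr : (0 < i.-1 < N)%N by lia.
have [e1 [e2 [w1 w2 ne]]] := ex_two hr hm.
pose a := sc (lam e2) (monov e1) - sc (lam e1) (monov e2).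
have : gmul v a = 0.
  apply: phi_inj => g; rewrite /a gmulB !gmulZ phiB !phiZ !h5 //.
  by rewrite [X in X - _]mulrCA [X in _ - X]mulrCA [lam e2 * lam e1]mulrC subrr.
move=> /hv /pow_D /(_ e2); rewrite /a phiB !phiZ !phi_monov eqxx eq_sym (negPf ne).
have hi : (wt e2 < i)%N by rewrite w2; lia.
by rewrite mulr0 mulr1 sub0r => /(_ hi) /eqP; rewrite oppr_eq0 (negPf (h4 _ w1)).
Qed.


Lemma main_sec : (2 <= m)%N ->
  (forall r : nat, (0 < r < N)%N -> ~ principal (pow_ideal J r)) /\
  (forall a, pow_ideal J N a <-> exists c : 'F_p, a = [ffun g => c * gsum gT p g]) /\
  principal (pow_ideal J N) /\
  (forall i : nat, (i <= N)%N ->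
     (checkable (pow_ideal J i) <-> (i == 0)%N || (i == 1)%N)).
Proof.
move=> hm; split; first by move=> r hr; exact: partA.
split; first exact: partB.
split; first exact: partC.
move=> [|[|i]] hi /=.
- split => // _; exists 0 => a; rewrite zero_mul; split => // _; exact: pow_ideal0.
- split => // _; exists (gsum gT p) => a; rewrite pow1 jacE gsumM.
  by split => [->|/sc_gsum0 //]; apply/ffunP => g; rewrite !ffunE mul0r.
- split => // hc; exfalso; apply: (partD_neg (i := i.+2)) => //.
Qed.

End Main.
Theorem mainTheorem4 (p m : nat) (gT : finGroupType)
  (hp : prime p) (hm : (2 <= m)%N)
  (habelem : (p.-abelem [set: gT])%g) (hcard : #|gT| = (p ^ m)%N) :
  let J := @jacobson gT p in
  let N := (m * (p - 1))%N in
  (forall r : nat, (0 < r < N)%N -> ~ principal (pow_ideal J r)) /\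
  (forall a, pow_ideal J N a <-> exists c : 'F_p, a = [ffun g => c * gsum gT p g]) /\
  principal (pow_ideal J N) /\
  (forall i : nat, (i <= N)%N ->
     (checkable (pow_ideal J i) <-> (i == 0)%N || (i == 1)%N)).
Proof.
have iso : ([set: gT] \isog [set: 'rV['F_p]_m])%g.
  rewrite (isog_abelem_card _ habelem) fin_Fp_lmod_abelem //= !cardsT card_mx mul1n.
  by rewrite card_Fp // hcard.
case/isogP: iso => f injf imf.
pose X (g : gT) : {ffun 'I_m -> 'F_p} := [ffun i => f g 0 i].
have XM : forall g h, X (g * h)%g = X g + X h.
  move=> g h; apply/ffunP => i; rewrite !ffunE morphM ?inE //.
  by rewrite [(_ * _)%g]/= mxE.
have Xinj : injective X.
  move=> g h e; apply: (injmP injf); rewrite ?inE //.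
  apply/rowP => i; move/ffunP: e => /(_ i); by rewrite !ffunE.
pose Y (e : {ffun 'I_m -> 'F_p}) := odflt 1%g [pick g | X g == e].
have XY : cancel Y X.
  move=> e; rewrite /Y; case: pickP => [g /eqP //|none].
  have : (\row_i e i) \in (f @* [set: gT])%g by rewrite imf inE.
  case/morphimP => g _ _ eg; move: (none g); rewrite /X.
  suff -> : [ffun i => f g 0 i] = e by rewrite eqxx.
  by apply/ffunP => i; rewrite ffunE -eg mxE.
exact: (main_sec hp XM Xinj XY hm).
Qed.
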